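(* Let $I=\langle Q,D,\tau_{in},\tau_{out}\rangle$ be an instance of DTP where $Q$ is nonrecursive, connected, and contains no rigid atoms. Then DTP holds for $I$ if and only if for every tuple $\vec o$ over $C_I$, $\vec o\in Q(D\cup B_I,\tau_{out})$ implies $\vec o\in Q(D,\tau_{out})$, where $B_I$ is the bounded critical update of $I$.
   Context: Temporal Datalog. Constants are partitioned into objects and integer time points; variables into object variables and time variables. A time term is a time point, a time variable, or an expression $t+k$ with $t$ a time variable and $k\in\mathbb{Z}$. Each predicate is either extensional (EDB) or intensional (IDB) and has an arity $n\ge0$, each position being of object sort or time sort; a predicate is rigid if all its positions are of object sort, and temporal if its last position is of time sort and all others are of object sort. An atom $P(t_1,\dots,t_n)$ has terms of the required sorts. A rule is $\bigwedge_i\alpha_i\to\alpha$ with $\alpha$ and all $\alpha_i$ rigid or temporal atoms, $\alpha$ IDB whenever the body is nonempty, and every head variable occurring in the body. A program is a finite set of rules. A fact is a ground rigid or temporal atom without $+$ (identified with the rule $\top\to\alpha$); a dataset is a finite set of EDB facts. Rules are read as universally quantified first-order sentences with $+$ interpreted as integer addition; $\Pi\models\alpha$ denotes entailment. A query is $Q=\langle P_Q,\Pi_Q\rangle$ with $\Pi_Q$ a program and $P_Q$ an IDB predicate of $\Pi_Q$; it is temporal if $P_Q$ is temporal. For a temporal query $Q$, dataset $D$ and time point $\tau$, $Q(D,\tau)$ is the set of tuples of objects $\vec o$ with $\Pi_Q\cup D\models P_Q(\vec o,\tau)$. A $\tau_{in}$-history is a dataset consisting of rigid facts and temporal facts with time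 argument $\le\tau_{in}$; a $\tau_{in}$-update is a dataset consisting of temporal facts with time argument $>\tau_{in}$. Definitive Time Point (DTP): an instance is $\langle Q,D,\tau_{in},\tau_{out}\rangle$ with $Q$ a temporal query, $D$ a $\tau_{in}$-history and $\tau_{out}\le\tau_{in}$; DTP holds for it iff $Q(D,\tau_{out})=Q(D\cup U,\tau_{out})$ for every $\tau_{in}$-update $U$. Critical domain: $C_I$ is the set of all objects occurring in $\Pi_Q\cup D$ together with one fresh object $o_I$. Predicate $P$ depends on $P'$ in $\Pi$ if some rule of $\Pi$ has $P$ in the head and $P'$ in the body; $\Pi$ (or a query with program $\Pi$) is nonrecursive if the graph of this dependency relation is acyclic. A rule is connected if it contains at most one time variable and, if a time variable occurs in the body, it also occurs in the head; a query is connected if all its rules are. For a time term $s$, $\Delta(s)=k$ if $s=t+k$ with $t$ a variable, and $\Delta(s)=0$ otherwise. The radius of a connected rule $r$ mentioning a time variable is the maximum of $|\Delta(s)-\Delta(s')|$ where $s$ is the time argument of the head and $s'$ the time argument of a body atom of $r$. The radius $\mathrm{rad}(\Pi)$ of a connected program is the number of rules of $\Pi$ times the maximum radius of a rule of $\Pi$. Bounded critical update: let $\tau_0$ be the maximum of $\tau_{out}$ and the largest time point occurring in $\Pi_Q$; a time point $\tau$ is critical for $I$ if $\tau_{in}<\tau\le\tau_0+\mathrm{rad}(\Pi_Q)$; $B_I$ consists of all facts $P(\vec o,\tau)$ with $P$ a temporal EDB predicate of $\Pi_Q$, $\vec o$ a tuple over $C_I$ and $\tau$ critical. *)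

(* Defs.v *)
From Stdlib Require Import ZArith List Relations.
Import ListNotations.
Open Scope Z_scope.

Inductive sort := SObj | STime.

(* A predicate: a name, the sorts of its positions (arity = length), and
   whether it is extensional (EDB, true) or intensional (IDB, false). *)
Record predicate := mkPred { pid : nat; psig : list sort; pedb : bool }.

(* Objects and object variables are indexed by nat; time points are integers;
   time variables are indexed by nat.  [TVar t k] is the time term t+k
   (the plain variable t is TVar t 0). *)
Inductive term :=
| OConst (o : nat)
| OVar (x : nat)
| TConst (z : Z)
| TVar (t : nat) (k : Z).

Record atom := mkAtom { apred : predicate; aargs : list term }.

Record rule := mkRule { rbody : list atom; rhead : atom }.

Definition program := list rule.

Definition dataset := atom -> Prop.

Definition union (D U : dataset) : dataset := fun f => D f \/ U f.

Definition term_sort (s : term) : sort :=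
  match s with OConst _ | OVar _ => SObj | TConst _ | TVar _ _ => STime end.

Definition atom_wf (a : atom) : Prop := map term_sort (aargs a) = psig (apred a).

Definition rigid_pred (P : predicate) : Prop := Forall (fun s => s = SObj) (psig P).
Definition temporal_pred (P : predicate) : Prop :=
  exists n, psig P = repeat SObj n ++ [STime].

Definition rule_atoms (r : rule) : list atom := rhead r :: rbody r.

Definition ovars_term (s : term) : list nat :=
  match s with OVar x => [x] | _ => [] end.
Definition tvars_term (s : term) : list nat :=
  match s with TVar t _ => [t] | _ => [] end.
Definition ovars_atom (a : atom) : list nat := flat_map ovars_term (aargs a).
Definition tvars_atom (a : atom) : list nat := flat_map tvars_term (aargs a).

Definition rule_wf (r : rule) : Prop :=
  (forall a, In a (rule_atoms r) ->
     atom_wf a /\ (rigid_pred (apred a) \/ temporal_pred (apred a))) /\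
  (rbody r <> [] -> pedb (apred (rhead r)) = false) /\
  (forall x, In x (ovars_atom (rhead r)) -> In x (flat_map ovars_atom (rbody r))) /\
  (forall t, In t (tvars_atom (rhead r)) -> In t (flat_map tvars_atom (rbody r))).

(* A program is a finite set of rules: a duplicate-free list. *)
Definition program_ok (P : program) : Prop := NoDup P /\ Forall rule_wf P.

Definition ground_term (s : term) : Prop :=
  match s with OConst _ | TConst _ => True | _ => False end.

Definition is_fact (a : atom) : Prop :=
  atom_wf a /\ (rigid_pred (apred a) \/ temporal_pred (apred a)) /\
  Forall ground_term (aargs a).

Definition dataset_ok (D : dataset) : Prop :=
  (exists l, forall f, D f -> In f l) /\
  (forall f, D f -> is_fact f /\ pedb (apred f) = true).

Definition time_arg (a : atom) : term := last (aargs a) (TConst 0).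

Definition pred_in_prog (P : program) (p : predicate) : Prop :=
  exists r a, In r P /\ In a (rule_atoms r) /\ apred a = p.

Record query := mkQuery { qpred : predicate; qprog : program }.

Definition query_ok (Q : query) : Prop :=
  program_ok (qprog Q) /\ pedb (qpred Q) = false /\ pred_in_prog (qprog Q) (qpred Q).

Definition temporal_query (Q : query) : Prop :=
  query_ok Q /\ temporal_pred (qpred Q).

(* A first-order structure: an arbitrary (nonempty, since it interprets the
   object constants) object domain; the time sort is interpreted as Z with
   + as integer addition. *)
Record interp (Dom : Type) := mkInterp {
  iobj : nat -> Dom;
  irel : predicate -> list (Dom + Z) -> Prop }.
Arguments iobj {Dom}.
Arguments irel {Dom}.

Definition eval_term {Dom : Type} (I : interp Dom) (vo : nat -> Dom) (vt : nat -> Z)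
  (s : term) : Dom + Z :=
  match s with
  | OConst o => inl (iobj I o)
  | OVar x => inl (vo x)
  | TConst z => inr z
  | TVar t k => inr (vt t + k)
  end.

Definition holds {Dom : Type} (I : interp Dom) (vo : nat -> Dom) (vt : nat -> Z)
  (a : atom) : Prop :=
  irel I (apred a) (map (eval_term I vo vt) (aargs a)).

Definition sat_rule {Dom : Type} (I : interp Dom) (r : rule) : Prop :=
  forall vo vt, (forall b, In b (rbody r) -> holds I vo vt b) -> holds I vo vt (rhead r).

(* P ∪ D |= alpha  (facts identified with rules  T -> alpha). *)
Definition entails (P : program) (D : dataset) (alpha : atom) : Prop :=
  forall (Dom : Type) (I : interp Dom),
    (forall r, In r P -> sat_rule I r) ->
    (forall f, D f -> sat_rule I (mkRule [] f)) ->
    forall vo vt, holds I vo vt alpha.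

Definition answers (Q : query) (D : dataset) (tau : Z) (o : list nat) : Prop :=
  length o = Nat.pred (length (psig (qpred Q))) /\
  entails (qprog Q) D (mkAtom (qpred Q) (map OConst o ++ [TConst tau])).

Definition history (tin : Z) (D : dataset) : Prop :=
  dataset_ok D /\
  forall f, D f ->
    rigid_pred (apred f) \/
    (temporal_pred (apred f) /\ exists z, time_arg f = TConst z /\ z <= tin).

Definition update (tin : Z) (U : dataset) : Prop :=
  dataset_ok U /\
  forall f, U f -> temporal_pred (apred f) /\ exists z, time_arg f = TConst z /\ tin < z.

Definition DTP_instance (Q : query) (D : dataset) (tin tout : Z) : Prop :=
  temporal_query Q /\ history tin D /\ tout <= tin.

Definition DTP (Q : query) (D : dataset) (tin tout : Z) : Prop :=
  forall U, update tin U ->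
    forall o, answers Q D tout o <-> answers Q (union D U) tout o.

Definition depends (P : program) (p p' : predicate) : Prop :=
  exists r, In r P /\ apred (rhead r) = p /\ exists b, In b (rbody r) /\ apred b = p'.

Definition nonrecursive (P : program) : Prop :=
  forall p, ~ clos_trans predicate (depends P) p p.

Definition rule_tvars (r : rule) : list nat := flat_map tvars_atom (rule_atoms r).

Definition connected_rule (r : rule) : Prop :=
  (forall t1 t2, In t1 (rule_tvars r) -> In t2 (rule_tvars r) -> t1 = t2) /\
  (forall t, In t (flat_map tvars_atom (rbody r)) -> In t (tvars_atom (rhead r))).

Definition connected_query (Q : query) : Prop := Forall connected_rule (qprog Q).

Definition no_rigid_atoms (P : program) : Prop :=
  forall r a, In r P -> In a (rule_atoms r) -> ~ rigid_pred (apred a).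

Definition delta (s : term) : Z := match s with TVar _ k => k | _ => 0 end.

(* Radius of a connected rule mentioning a time variable; 0 for rules that
   mention no time variable (they do not contribute to the maximum). *)
Definition rule_radius (r : rule) : Z :=
  match rule_tvars r with
  | [] => 0
  | _ => fold_right Z.max 0
           (map (fun b => Z.abs (delta (time_arg (rhead r)) - delta (time_arg b))) (rbody r))
  end.

Definition prog_radius (P : program) : Z :=
  Z.of_nat (length P) * fold_right Z.max 0 (map rule_radius P).

Definition obj_in_atom (o : nat) (a : atom) : Prop := In (OConst o) (aargs a).

Definition obj_in_prog (P : program) (o : nat) : Prop :=
  exists r a, In r P /\ In a (rule_atoms r) /\ obj_in_atom o a.

Definition obj_in_data (D : dataset) (o : nat) : Prop :=
  exists f, D f /\ obj_in_atom o f.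

Definition fresh_obj (Q : query) (D : dataset) (oI : nat) : Prop :=
  ~ obj_in_prog (qprog Q) oI /\ ~ obj_in_data D oI.

Definition critical_domain (Q : query) (D : dataset) (oI : nat) (o : nat) : Prop :=
  obj_in_prog (qprog Q) o \/ obj_in_data D o \/ o = oI.

Definition term_times (s : term) : list Z :=
  match s with TConst z => [z] | _ => [] end.

Definition prog_times (P : program) : list Z :=
  flat_map (fun r => flat_map (fun a => flat_map term_times (aargs a)) (rule_atoms r)) P.

Definition tau0 (Q : query) (tout : Z) : Z := fold_right Z.max tout (prog_times (qprog Q)).

Definition critical (Q : query) (tin tout tau : Z) : Prop :=
  tin < tau /\ tau <= tau0 Q tout + prog_radius (qprog Q).

Definition bcu (Q : query) (D : dataset) (tin tout : Z) (oI : nat) : dataset :=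
  fun f => exists p o tau,
    pred_in_prog (qprog Q) p /\ pedb p = true /\ temporal_pred p /\
    Forall (critical_domain Q D oI) o /\ length o = Nat.pred (length (psig p)) /\
    critical Q tin tout tau /\
    f = mkAtom p (map OConst o ++ [TConst tau]).

(* Main.v *)
From Stdlib Require Import ZArith List Relations Lia Classical ClassicalEpsilon.
Require Import Defs.
Import ListNotations.
Open Scope Z_scope.

Lemma last_map' {A B} (f : A -> B) (l : list A) d : last (map f l) (f d) = f (last l d).
Proof. induction l as [|x l IH]; simpl; auto. destruct l; simpl in *; auto. Qed.

Lemma entails_mono P D1 D2 a : (forall f, D1 f -> D2 f) -> entails P D1 a -> entails P D2 a.
Proof. unfold entails; intros H E Dom I HP HD vo vt. apply E; auto. Qed.

Definition hterm (h : nat -> nat) s := match s with OConst c => OConst (h c) | _ => s end.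
Definition hatom h a := mkAtom (apred a) (map (hterm h) (aargs a)).
Definition hdata h (D : dataset) : dataset := fun f => exists g, D g /\ f = hatom h g.

Lemma holds_h {Dom} (I : interp Dom) h vo vt a :
  holds (mkInterp Dom (fun c => iobj I (h c)) (irel I)) vo vt a = holds I vo vt (hatom h a).
Proof. unfold holds, hatom; simpl. rewrite map_map. f_equal. apply map_ext. intro s; destruct s; reflexivity. Qed.

Lemma hatom_id h a : (forall c, In (OConst c) (aargs a) -> h c = c) -> hatom h a = a.
Proof. destruct a as [p args]; unfold hatom; simpl; intro H; f_equal.
  induction args as [|s args IH]; simpl; auto. f_equal.
  - destruct s; simpl; auto. rewrite H; simpl; auto.
  - apply IH; intros; apply H; simpl; auto. Qed.

Lemma entails_hom P D a h :
  (forall r b c, In r P -> In b (rule_atoms r) -> In (OConst c) (aargs b) -> h c = c) ->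
  entails P D a -> entails P (hdata h D) (hatom h a).
Proof. intros Hc E Dom I HP HD vo vt.
  rewrite <- holds_h. apply E.
  - intros r Hr vo' vt' Hb. rewrite holds_h, hatom_id.
    + apply (HP r Hr). intros b Hbin. specialize (Hb b Hbin). rewrite holds_h, hatom_id in Hb; auto.
      intros c; apply (Hc r b c Hr); simpl; auto.
    + intros c; apply (Hc r _ c Hr); simpl; auto.
  - intros f Hf vo' vt' _. rewrite holds_h.
    apply (HD (hatom h f) (ex_intro _ f (conj Hf eq_refl)) vo' vt'). intros b [].
Qed.

Lemma no_fresh_answer P D p o t oI :
  Forall rule_wf P -> dataset_ok D ->
  ~ obj_in_prog P oI -> ~ obj_in_data D oI ->
  entails P D (mkAtom p (map OConst o ++ [TConst t])) -> In oI o -> False.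
Proof. intros Hwf HD Hfp Hfd E Hin.
  specialize (E nat (mkInterp nat (fun c => c) (fun p args => ~ In (inl oI) args))).
  unshelve eapply (E _ _ (fun _ => 0%nat) (fun _ => 0)).
  - intros r Hr vo vt Hb. unfold holds; simpl. intro Hi.
    apply in_map_iff in Hi as [s [Hs Hsin]]. destruct s; simpl in Hs; try discriminate; injection Hs as Hs; subst.
    + apply Hfp. exists r, (rhead r). split; auto. split; simpl; auto.
    + rewrite Forall_forall in Hwf. destruct (Hwf r Hr) as [_ [_ [Ho _]]].
      assert (Hx : In x (ovars_atom (rhead r))).
      { unfold ovars_atom. apply in_flat_map. exists (OVar x); simpl; auto. }
      apply Ho in Hx. apply in_flat_map in Hx as [b [Hb1 Hb2]].
      apply in_flat_map in Hb2 as [s [Hs1 Hs2]]. destruct s; simpl in Hs2; try contradiction.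
      destruct Hs2 as [<-|[]].
      apply (Hb b Hb1). simpl. apply in_map_iff. exists (OVar x0); simpl; auto.
  - intros f Hf vo vt _. unfold holds; simpl. intro Hi.
    destruct (proj2 HD f Hf) as [[_ [_ Hg]] _].
    apply in_map_iff in Hi as [s [Hs Hsin]]. rewrite Forall_forall in Hg. specialize (Hg s Hsin).
    destruct s; simpl in Hs, Hg; try discriminate; try contradiction. injection Hs as Hs; subst.
    apply Hfd. exists f; split; auto.
  - simpl. apply in_map_iff. exists (OConst oI). split; auto. apply in_or_app; left. apply in_map; auto.
Qed.

Definition ztime (vt : nat -> Z) (s : term) : Z :=
  match s with TConst z => z | TVar t k => vt t + k | _ => 0 end.
Definition timeof {Dom} (l : list (Dom + Z)) : Z :=
  match last l (inr 0) with inr z => z | inl _ => 0 end.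

Lemma timeof_eval {Dom} (I : interp Dom) vo vt a :
  timeof (map (eval_term I vo vt) (aargs a)) = ztime vt (time_arg a).
Proof. unfold timeof, time_arg.
  change (@inr Dom Z 0) with (eval_term I vo vt (TConst 0)). rewrite last_map'.
  destruct (last (aargs a) (TConst 0)); reflexivity. Qed.

Inductive rel (P : program) (qp : predicate) (tout : Z) : list predicate -> predicate -> Z -> Prop :=
| rel0 : rel P qp tout [] qp tout
| relS : forall ps r vt b,
    rel P qp tout ps (apred (rhead r)) (ztime vt (time_arg (rhead r))) -> In r P -> In b (rbody r) ->
    rel P qp tout (apred (rhead r) :: ps) (apred b) (ztime vt (time_arg b)).

Lemma fold_max_ge l d x : In x l -> x <= fold_right Z.max d l.
Proof. induction l; simpl; intros Hx; [destruct Hx|destruct Hx as [->|H]]; try lia. specialize (IHl H); lia. Qed.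
Lemma fold_max_d l d : d <= fold_right Z.max d l.
Proof. induction l; simpl; lia. Qed.

Lemma last_sort l n : map term_sort l = repeat SObj n ++ [STime] ->
  term_sort (last l (TConst 0)) = STime /\ In (last l (TConst 0)) l.
Proof. revert n; induction l as [|y l IH]; intros n H.
  - simpl in H. destruct n; discriminate.
  - destruct l as [|z l].
    + destruct n; simpl in H.
      * injection H as H1. simpl; auto.
      * injection H as H1 H2. destruct n; discriminate.
    + destruct n; simpl in H; injection H as H1 H2.
      * discriminate.
      * destruct (IH n H2) as [H3 H4]. change (last (y :: z :: l) (TConst 0)) with (last (z :: l) (TConst 0)).
        split; auto. right; auto.
Qed.

Lemma tvar_last l n t k : map term_sort l = repeat SObj n ++ [STime] -> In (TVar t k) l ->
  last l (TConst 0) = TVar t k.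
Proof. revert n; induction l as [|y l IH]; intros n H Hi.
  - destruct Hi.
  - destruct l as [|z l].
    + destruct Hi as [<-|[]]; reflexivity.
    + destruct n; simpl in H; injection H as H1 H2.
      * discriminate.
      * change (last (y :: z :: l) (TConst 0)) with (last (z :: l) (TConst 0)).
        destruct Hi as [Hy|Hi]; [subst y; simpl in H1; discriminate|]. eapply IH; eauto.
Qed.

Lemma ground_shape args n : map term_sort args = repeat SObj n ++ [STime] -> Forall ground_term args ->
  exists os z, args = map OConst os ++ [TConst z] /\ length os = n.
Proof. revert n; induction args as [|y l IH]; intros n H G.
  - destruct n; discriminate.
  - inversion G as [|y' l' Gy Gl]; subst. destruct n; simpl in H; injection H as H1 H2.
    + apply map_eq_nil in H2; subst. destruct y; simpl in *; try discriminate; try contradiction.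
      exists [], z; auto.
    + destruct (IH n H2 Gl) as [os [z [-> Hl]]].
      destruct y; simpl in *; try discriminate; try contradiction.
      exists (o :: os), z; simpl; auto.
Qed.

Section Trunc.
Variables (P : program) (qp : predicate) (tout : Z).
Hypothesis Hwf : Forall rule_wf P.
Hypothesis Hnr : nonrecursive P.
Hypothesis Hconn : Forall connected_rule P.
Hypothesis Hnrig : no_rigid_atoms P.
Hypothesis Hqp : pred_in_prog P qp.

Let m := fold_right Z.max 0 (map rule_radius P).
Let t0 := fold_right Z.max tout (prog_times P).

Lemma m_nonneg : 0 <= m. Proof. apply fold_max_d. Qed.

Lemma atom_shape r b : In r P -> In b (rule_atoms r) ->
  exists n, map term_sort (aargs b) = repeat SObj n ++ [STime].
Proof. intros Hr Hb. rewrite Forall_forall in Hwf. destruct (Hwf r Hr) as [H _].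
  destruct (H b Hb) as [Hw [Hrig | [n Ht]]].
  - exfalso; apply (Hnrig r b Hr Hb Hrig).
  - exists n. rewrite Hw; auto. Qed.

Lemma rel_inv ps q tau : rel P qp tout ps q tau ->
  pred_in_prog P q /\ (forall x, In x ps -> clos_trans _ (depends P) x q) /\ NoDup ps /\
  (forall x, In x ps -> In x (map (fun r => apred (rhead r)) P)) /\
  tau <= t0 + Z.of_nat (length ps) * m.
Proof. induction 1 as [|ps r vt b Hrel IH Hr Hb].
  - split; auto. split; [intros _ []|]. split; [constructor|]. split; [intros _ []|].
    simpl. pose proof (fold_max_d (prog_times P) tout). unfold t0. lia.
  - destruct IH as [_ [Hcl [Hnd [Hinc Htau]]]].
    assert (Hdep : depends P (apred (rhead r)) (apred b)).
    { exists r; split; auto. split; auto. exists b; auto. }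
    split; [exists r, b; split; auto; split; simpl; auto|].
    split.
    { intros x [<-|Hx]; [apply t_step; auto|]. eapply t_trans; [apply Hcl; auto| apply t_step; auto]. }
    split.
    { constructor; auto. intro Hin. apply (Hnr (apred (rhead r))); auto. }
    split.
    { intros x [<-|Hx]; auto. apply (in_map (fun r => apred (rhead r))); auto. }
    assert (Hbr : In b (rule_atoms r)) by (simpl; auto).
    destruct (atom_shape r b Hr Hbr) as [n Hn].
    destruct (last_sort _ _ Hn) as [Hs Hin].
    pose proof m_nonneg as Hm.
    assert (Hnm : 0 <= Z.of_nat (length ps) * m) by (apply Z.mul_nonneg_nonneg; lia).
    simpl length. rewrite Nat2Z.inj_succ. unfold Z.succ. rewrite Z.mul_add_distr_r, Z.mul_1_l.
    unfold time_arg in *. destruct (last (aargs b) (TConst 0)) as [c|x|z|t k] eqn:E; simpl in Hs; try discriminate; simpl.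
    + assert (z <= t0).
      { unfold t0. apply fold_max_ge. unfold prog_times. apply in_flat_map. exists r; split; auto.
        apply in_flat_map. exists b; split; auto. apply in_flat_map. exists (TConst z); simpl; auto. }
      lia.
    + rewrite Forall_forall in Hconn. destruct (Hconn r Hr) as [_ Hc2].
      assert (Ht : In t (flat_map tvars_atom (rbody r))).
      { apply in_flat_map. exists b; split; auto. apply in_flat_map. exists (TVar t k); simpl; auto. }
      apply Hc2 in Ht. apply in_flat_map in Ht as [s [Hs1 Hs2]].
      destruct s as [| |z'|t' k']; simpl in Hs2; try contradiction. destruct Hs2 as [->|[]].
      assert (Hhr : In (rhead r) (rule_atoms r)) by (simpl; auto).
      destruct (atom_shape r _ Hr Hhr) as [nh Hnh].
      pose proof (tvar_last _ _ _ _ Hnh Hs1) as Eh.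
      rewrite Eh in Htau. simpl in Htau.
      assert (Hrad : Z.abs (k' - k) <= rule_radius r).
      { unfold rule_radius. destruct (rule_tvars r) eqn:Etv.
        - exfalso. assert (In t (rule_tvars r)); [|rewrite Etv in H; auto].
          unfold rule_tvars. apply in_flat_map. exists b; split; auto.
          apply in_flat_map. exists (TVar t k); simpl; auto.
        - apply fold_max_ge. apply in_map_iff. exists b; split; auto.
          unfold time_arg. rewrite Eh, E. reflexivity. }
      assert (rule_radius r <= m) by (apply fold_max_ge; apply in_map; auto).
      lia.
Qed.

Definition Ucut (U : dataset) : dataset := fun f =>
  U f /\ pred_in_prog P (apred f) /\ ztime (fun _ => 0) (time_arg f) <= t0 + prog_radius P.

Lemma holds_cut {Dom} (I : interp Dom) (R : predicate -> Z -> Prop) vo vt a :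
  holds (mkInterp Dom (iobj I) (fun p args => irel I p args \/ R p (timeof args))) vo vt a <->
  holds I vo vt a \/ R (apred a) (ztime vt (time_arg a)).
Proof. unfold holds; simpl.
  rewrite (map_ext (eval_term (mkInterp Dom (iobj I) (fun p args => irel I p args \/ R p (timeof args))) vo vt) (eval_term I vo vt)) by (intro s; destruct s; reflexivity).
  rewrite timeof_eval. tauto. Qed.

Lemma truncate D U o :
  (forall f, U f -> exists z, time_arg f = TConst z) ->
  entails P (Defs.union D U) (mkAtom qp (map OConst o ++ [TConst tout])) ->
  entails P (Defs.union D (Ucut U)) (mkAtom qp (map OConst o ++ [TConst tout])).
Proof. intros HU E Dom I HP HD vo vt.
  pose (Rel := fun q tau => exists ps, rel P qp tout ps q tau).
  pose (R := fun q tau => ~ Rel q tau).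
  pose (I' := mkInterp Dom (iobj I) (fun p args => irel I p args \/ R p (timeof args))).
  assert (HP' : forall r, In r P -> sat_rule I' r).
  { intros r Hr vo' vt' Hb. apply holds_cut.
    destruct (classic (Rel (apred (rhead r)) (ztime vt' (time_arg (rhead r))))) as [[ps Hps]|Hn]; [left|right; auto].
    apply (HP r Hr). intros b Hb'. assert (Hx := Hb b Hb'). apply holds_cut in Hx. destruct Hx as [|Hn]; auto.
    exfalso; apply Hn. exists (apred (rhead r) :: ps). apply relS; auto. }
  assert (HD' : forall f, Defs.union D U f -> sat_rule I' (mkRule [] f)).
  { intros f [Df|Uf] vo' vt' _; apply holds_cut.
    + left. apply (HD f (or_introl Df)). intros _ [].
    + destruct (classic (Rel (apred f) (ztime vt' (time_arg f)))) as [[ps Hps]|Hn]; [left|right; auto].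
      destruct (rel_inv _ _ _ Hps) as [Hpp [_ [Hnd [Hinc Ht]]]].
      apply (HD f); [|simpl; intros _ []]. right. split; auto. split; auto.
      destruct (HU f Uf) as [z Hz]. rewrite Hz in *. simpl in *.
      assert (Hl : (length ps <= length (map (fun r => apred (rhead r)) P))%nat)
        by (apply NoDup_incl_length; auto).
      rewrite length_map in Hl. unfold prog_radius. fold m.
      pose proof m_nonneg.
      assert (Z.of_nat (length ps) * m <= Z.of_nat (length P) * m) by (apply Z.mul_le_mono_nonneg_r; lia).
      lia. }
  pose proof (E Dom I' HP' HD' vo vt) as H. apply holds_cut in H.
  destruct H as [H|H]; auto.
  exfalso. apply H. exists []. unfold time_arg; simpl. rewrite last_last. apply rel0.
Qed.
End Trunc.

Definition objs_term s := match s with OConst c => [c] | _ => [] end.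
Definition objs_atom a := flat_map objs_term (aargs a).

Lemma in_objs a c : In (OConst c) (aargs a) -> In c (objs_atom a).
Proof. intro H. unfold objs_atom. apply in_flat_map. exists (OConst c); simpl; auto. Qed.

Fixpoint tuples (L : list nat) (n : nat) : list (list nat) :=
  match n with O => [[]] | S n' => flat_map (fun x => map (cons x) (tuples L n')) L end.

Lemma tuples_in L o : (forall x, In x o -> In x L) -> In o (tuples L (length o)).
Proof. induction o as [|a o IH]; simpl; intros H; auto.
  apply in_flat_map. exists a; split; auto. apply in_map. apply IH; auto. Qed.

Lemma map_OConst_sort (o : list nat) : map term_sort (map OConst o) = repeat SObj (length o).
Proof. induction o; simpl; f_equal; auto. Qed.

Lemma bcu_update Q D tin tout oI :
  dataset_ok D -> update tin (bcu Q D tin tout oI).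
Proof. intros [[lD HlD] _]. split; [split|].
  - set (Lo := flat_map (fun r => flat_map objs_atom (rule_atoms r)) (qprog Q) ++ flat_map objs_atom lD ++ [oI]).
    set (bnd := (tau0 Q tout + prog_radius (qprog Q))%Z).
    set (Lt := map (fun i => (tin + 1 + Z.of_nat i)%Z) (seq 0 (Z.to_nat (bnd - tin)))).
    set (Lp := flat_map (fun r => map apred (rule_atoms r)) (qprog Q)).
    exists (flat_map (fun p => flat_map (fun tau => map (fun o => mkAtom p (map OConst o ++ [TConst tau]))
              (tuples Lo (Nat.pred (length (psig p))))) Lt) Lp).
    intros f [p [o [tau [Hp [_ [_ [Ho [Hl [[Ht1 Ht2] ->]]]]]]]]].
    apply in_flat_map. exists p. split.
    { destruct Hp as [r [a [Hr [Ha <-]]]]. apply in_flat_map. exists r; split; auto. apply in_map; auto. }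
    apply in_flat_map. exists tau. split.
    { apply in_map_iff. exists (Z.to_nat (tau - tin - 1)). split; [lia|]. apply in_seq. unfold bnd in *. lia. }
    apply in_map_iff. exists o. split; auto. rewrite <- Hl. apply tuples_in.
    intros x Hx. rewrite Forall_forall in Ho. destruct (Ho x Hx) as [[r [a [Hr [Ha Hc]]]] | [[g [Hg Hc]] | Hc]].
    + apply in_or_app; left. apply in_flat_map. exists r; split; auto. apply in_flat_map. exists a; split; auto. apply in_objs; auto.
    + apply in_or_app; right; apply in_or_app; left. apply in_flat_map. exists g; split; auto. apply in_objs; auto.
    + subst x. apply in_or_app; right; apply in_or_app; right; simpl; auto.
  - intros f [p [o [tau [Hp [He [[n Ht] [Ho [Hl [_ ->]]]]]]]]]. simpl. split; auto.
    split; [|split].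
    + unfold atom_wf; simpl. rewrite map_app, map_OConst_sort, Ht. simpl. rewrite Ht in Hl.
      rewrite length_app, repeat_length in Hl. simpl in Hl. rewrite Hl. f_equal. f_equal. lia.
    + right. exists n; auto.
    + apply Forall_app; split; [|constructor; simpl; auto].
      apply Forall_forall. intros x Hx. apply in_map_iff in Hx as [c [<- _]]. simpl; auto.
  - intros f [p [o [tau [Hp [He [Htp [Ho [Hl [[Ht1 _] ->]]]]]]]]]. simpl. split; auto.
    exists tau. unfold time_arg; simpl. rewrite last_last. auto.
Qed.

Theorem lemma5 (Q : query) (D : dataset) (tin tout : Z) (oI : nat) :
  DTP_instance Q D tin tout ->
  nonrecursive (qprog Q) ->
  connected_query Q ->
  no_rigid_atoms (qprog Q) ->
  fresh_obj Q D oI ->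
  (DTP Q D tin tout <->
   forall o : list nat,
     Forall (critical_domain Q D oI) o ->
     answers Q (union D (bcu Q D tin tout oI)) tout o ->
     answers Q D tout o).
Proof.
  intros [[[HPok [Hqe Hqp]] Htq] [Hhist Hle]] Hnr Hconn Hnrig [Hfp Hfd].
  destruct HPok as [_ Hwf]. destruct Hhist as [HDok _].
  split.
  - intros Hdtp o Ho Hans. apply (Hdtp _ (bcu_update Q D tin tout oI HDok) o). exact Hans.
  - intros Hc U HU o. split.
    + intros [Hl E]. split; auto. eapply entails_mono; [|exact E]. intros f Hf; left; auto.
    + intros [Hl E].
      assert (HUt : forall f, U f -> exists z, time_arg f = TConst z).
      { intros f Hf; destruct (proj2 HU f Hf) as [_ [z [Hz _]]]; eauto. }
      pose proof (truncate (qprog Q) (qpred Q) tout Hwf Hnr Hconn Hnrig Hqp D U o HUt E) as E1.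
      set (h := fun c => if excluded_middle_informative (critical_domain Q D oI c) then c else oI).
      assert (Hh : forall c, critical_domain Q D oI c -> h c = c).
      { intros c Hc'; unfold h; destruct excluded_middle_informative; tauto. }
      assert (Hhc : forall c, critical_domain Q D oI (h c)).
      { intro c; unfold h; destruct excluded_middle_informative; auto. right; right; auto. }
      pose proof (entails_hom _ _ _ h (fun r b c Hr Hb Hin => Hh c (or_introl (ex_intro _ r (ex_intro _ b (conj Hr (conj Hb Hin)))))) E1) as E2.
      assert (Eq : hatom h (mkAtom (qpred Q) (map OConst o ++ [TConst tout])) = mkAtom (qpred Q) (map OConst (map h o) ++ [TConst tout])).
      { unfold hatom; simpl. rewrite !map_app, !map_map. reflexivity. }
      rewrite Eq in E2.
      assert (E3 : answers Q (union D (bcu Q D tin tout oI)) tout (map h o)).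
      { split; [rewrite length_map; auto|]. eapply entails_mono; [|exact E2].
        intros f [g [[Dg|Ug] ->]].
        - left. rewrite hatom_id; auto. intros c Hcin. apply Hh. right; left. exists g; split; auto.
        - right. destruct Ug as [Ug [Hpp Hz]]. destruct HU as [[_ HUok] HUt2].
          destruct (HUok g Ug) as [[Hw [_ Hg]] He]. destruct (HUt2 g Ug) as [[n Ht] [z [Hz' Hlt]]].
          unfold atom_wf in Hw. rewrite Ht in Hw.
          destruct (ground_shape _ _ Hw Hg) as [os [z' [Ea Hlen]]].
          assert (z' = z).
          { unfold time_arg in Hz'; rewrite Ea, last_last in Hz'; injection Hz'; auto. } subst z'.
          exists (apred g), (map h os), z. split; auto. split; auto. split; [exists n; auto|]. split.
          { apply Forall_forall; intros x Hx; apply in_map_iff in Hx as [c [<- _]]; auto. }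
          split. { rewrite length_map, Ht, length_app, repeat_length; simpl; lia. }
          split. { split; auto. unfold time_arg in Hz; rewrite Ea, last_last in Hz; simpl in Hz; exact Hz. }
          unfold hatom. rewrite Ea, map_app, !map_map. reflexivity. }
      assert (Hfa : Forall (critical_domain Q D oI) (map h o)).
      { apply Forall_forall; intros x Hx; apply in_map_iff in Hx as [c [<- _]]; auto. }
      destruct (Hc _ Hfa E3) as [_ E4].
      destruct (classic (forall x, In x o -> critical_domain Q D oI x)) as [Hall|Hnall].
      * rewrite (map_ext_in h id) in E4; [rewrite map_id in E4; split; auto|]. intros; apply Hh; auto.
      * exfalso. apply not_all_ex_not in Hnall as [x Hx]. apply imply_to_and in Hx as [Hxo Hxc].
        apply (no_fresh_answer _ _ _ _ _ _ Hwf HDok Hfp Hfd E4). apply in_map_iff. exists x. split; auto.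
        unfold h; destruct excluded_middle_informative; tauto.
Qed.
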